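(* Let $\sigma$ and $\tau$ be compositions of the same positive integer $m$. Then the map $\Psi_{\sigma,\tau}:\Gamma(\mathsf{hypo},\sigma)\to\Gamma(\mathsf{hypo},\tau)$, $T\mapsto\pi_\tau(\overline{T})$, is an isomorphism of unlabelled directed graphs.
   Context: Entries are positive integers. A quasi-array of size $m$ is an array $Q$ with cells $(i,j)$, $1\le i\le m$, $1\le j\le m-i+1$, each containing a positive integer, with first row weakly increasing and $Q_{(i,j)}=Q_{(1,i+j-1)}+i-1$. A quasi-ribbon tableau of shape $\sigma=(\sigma_1,\dots,\sigma_r)$ is a filling with positive integers of the diagram having $\sigma_i$ cells in row $i$, the leftmost cell of row $i+1$ directly below the rightmost cell of row $i$, weakly increasing along rows and strictly increasing down columns. Its column reading is the word read column by column left to right, each column bottom to top. Quasi-Kashiwara operator $f_i$ on a word $u$: undefined if $u$ contains a subsequence $(i+1)\,i$ or contains no $i$; otherwise replaces the rightmost $i$ by $i+1$. $\Gamma(\mathsf{hypo},\sigma)$ is the directed graph whose vertices are the quasi-ribbon tableaux of shape $\sigma$ (identified with their column readings), with an edge $u\to f_i(u)$ labelled $i$ whenever defined. For a quasi-array $Q$ of size $m$ and composition $\tau$ of $m$, $\pi_\tau(Q)$ is the quasi-ribbon tableau formed by the cells of $Q$ making up a quasi-ribbon diagram of shape $\tau$ whose first cell is $(1,1)$. For a quasi-ribbon tableau $T$ of shape $\sigma$ with $m$ cells, $\overline{T}$ is the unique quasi-array of size $m$ with $\pi_\sigma(\overline{T})=T$. *)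

(* Defs.v *)
(* All indices are 1-based as in the paper. *)
From mathcomp Require Import all_boot.
Set Implicit Arguments. Unset Strict Implicit. Unset Printing Implicit Defensive.

Definition composition (m : nat) (s : seq nat) : bool :=
  all (fun x => 0 < x) s && (sumn s == m).

(* Quasi-ribbon diagram of shape s, cells (i,j) with i = row, j = column,
   first cell (1,1); row i has nth 0 s i.-1 cells, and the leftmost cell of
   row i+1 is directly below the rightmost cell of row i. *)
Definition rstart (s : seq nat) (i : nat) : nat :=
  (sumn (map (fun x => x.-1) (take i.-1 s))).+1.

Definition in_ribbon (s : seq nat) (i j : nat) : bool :=
  (1 <= i <= size s) && (rstart s i <= j < rstart s i + nth 0 s i.-1).

(* A filling is a function on cells; only values on the diagram matter. *)
Definition filling := nat -> nat -> nat.

Definition is_qrt (s : seq nat) (T : filling) : Prop :=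
  (forall i j, in_ribbon s i j -> 0 < T i j) /\
  (forall i j, in_ribbon s i j -> in_ribbon s i j.+1 -> T i j <= T i j.+1) /\
  (forall i j, in_ribbon s i j -> in_ribbon s i.+1 j -> T i j < T i.+1 j).

(* Column reading: columns left to right, each column bottom to top.
   (sumn s bounds the number of columns; further columns are empty.) *)
Definition colread (s : seq nat) (T : filling) : seq nat :=
  flatten [seq [seq T i c | i <- rev (iota 1 (size s)) & in_ribbon s i c]
          | c <- iota 1 (sumn s)].

Fixpoint repl_first (a b : nat) (s : seq nat) : seq nat :=
  match s with
  | [::] => [::]
  | x :: s' => if x == a then b :: s' else x :: repl_first a b s'
  end.

Definition qf (i : nat) (u : seq nat) : option (seq nat) :=
  if (i \in u) && ~~ subseq [:: i.+1; i] u
  then Some (rev (repl_first i i.+1 (rev u)))  (* rightmost i replaced by i+1 *)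
  else None.

Definition gamma_vertex (s : seq nat) (w : seq nat) : Prop :=
  exists T, is_qrt s T /\ colread s T = w.

Definition gamma_edge (u v : seq nat) : Prop :=
  exists i, 0 < i /\ qf i u = Some v.

Definition is_qarray (m : nat) (Q : filling) : Prop :=
  (forall i j, 1 <= i -> 1 <= j -> i + j - 1 <= m ->
     0 < Q i j /\ Q i j = Q 1 (i + j - 1) + (i - 1)) /\
  (forall j, 1 <= j -> j < m -> Q 1 j <= Q 1 j.+1).

(* pi_tau(Q): the cells of Q forming a ribbon diagram of shape tau with first
   cell (1,1) (row i of the ribbon lies in row i of Q, with the same columns). *)
Definition proj (tau : seq nat) (Q : filling) : filling :=
  fun i j => if in_ribbon tau i j then Q i j else 0.

(* row of the k-th cell (in row-major ribbon order) of the shape s *)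
Definition rowof (s : seq nat) (k : nat) : nat :=
  count (fun r => sumn (take r s) < k) (iota 0 (size s)).

(* bar T: the quasi-array with pi_s(bar T) = T (explicit formula; the theorem
   additionally asserts that it is indeed a quasi-array projecting onto T). *)
Definition qbar (s : seq nat) (T : filling) : filling :=
  fun i j => let k := i + j - 1 in let r := rowof s k in
             T r (k - r + 1) - (r - 1) + (i - 1).

Definition Psi (sigma tau : seq nat) (T : filling) : filling :=
  proj tau (qbar sigma T).

(* Main.v *)
Require Import Defs.
From mathcomp Require Import all_boot zify.
Set Implicit Arguments. Unset Strict Implicit. Unset Printing Implicit Defensive.

Definition P (s : seq nat) j := sumn (take j s).

Lemma sumn_pred l : all (fun x => 0 < x) l -> sumn (map (fun x => x.-1) l) + size l = sumn l.
Proof. elim: l => //= x l IH /andP[hx hl]; rewrite -(IH hl); lia. Qed.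

Section S.
Variables (m : nat) (s : seq nat).
Hypothesis hs : composition m s.

Lemma hpos : all (fun x => 0 < x) s. Proof. by case/andP: hs. Qed.
Lemma hsum : sumn s = m. Proof. by case/andP: hs => _ /eqP. Qed.

Lemma P0 : P s 0 = 0. Proof. by rewrite /P take0. Qed.
Lemma Pn j : size s <= j -> P s j = m.
Proof. by move=> h; rewrite /P take_oversize // hsum. Qed.
Lemma sumn_take_le j l : sumn (take j l) <= sumn l.
Proof. by rewrite -{2}(cat_take_drop j l) sumn_cat leq_addr. Qed.
Lemma Pmono j j' : j <= j' -> P s j <= P s j'.
Proof. by move=> h; rewrite /P -(take_takel s h) sumn_take_le. Qed.
Lemma Pm j : P s j <= m.
Proof. by rewrite /P -hsum sumn_take_le. Qed.
Lemma PS j : j < size s -> P s j.+1 = P s j + nth 0 s j.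
Proof. by move=> h; rewrite /P (take_nth 0 h) sumn_rcons. Qed.
Lemma nth_pos j : j < size s -> 0 < nth 0 s j.
Proof. by move=> h; move/allP: hpos; apply; rewrite mem_nth. Qed.
Lemma Pgap j d : j + d <= size s -> P s j + d <= P s (j + d).
Proof.
elim: d => [|d IH] h; first by rewrite !addn0.
have h1 : j + d < size s by lia.
have -> : j + d.+1 = (j + d).+1 by lia.
rewrite PS // ; have := nth_pos h1; have := IH (ltnW h1); lia.
Qed.
Lemma Pgap' j j' : j <= j' -> j' <= size s -> P s j + (j' - j) <= P s j'.
Proof. move=> h1 h2; have := @Pgap j (j' - j); rewrite subnKC //; apply; lia. Qed.

Lemma rstartE i : i.-1 <= size s -> rstart s i = P s i.-1 - i.-1 + 1.
Proof.
move=> h; rewrite /rstart /P.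
have hp : all (fun x => 0 < x) (take i.-1 s).
  by apply/allP => x /mem_take hx; move/allP: hpos; apply.
have := sumn_pred hp; rewrite size_take_min; have -> : minn i.-1 (size s) = i.-1 by lia.
lia.
Qed.

Lemma nthE i : 1 <= i <= size s -> nth 0 s i.-1 = P s i - P s i.-1.
Proof. move=> h; have := @PS i.-1; have -> : i.-1.+1 = i by lia. move=> H; rewrite H; lia. Qed.

Lemma ribbonE i j : in_ribbon s i j = (1 <= i <= size s) && (P s i.-1 < i + j - 1 <= P s i).
Proof.
rewrite /in_ribbon; case h: (1 <= i <= size s) => //=.
rewrite rstartE ?nthE //; last by lia.
have := @Pgap' 0 i.-1; rewrite P0 => g.
have := @Pmono i.-1 i; have g2 := g ltac:(lia) ltac:(lia).
move=> m1; have {m1} m1 := m1 ltac:(lia).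
apply/idP/idP => /andP[a b]; apply/andP; split; lia.
Qed.

Lemma rowofE i k : 1 <= i <= size s -> P s i.-1 < k <= P s i -> rowof s k = i.
Proof.
move=> hi hk; rewrite /rowof.
transitivity (count (fun r => r < i) (iota 0 (size s))).
  apply: eq_in_count => r; rewrite mem_iota => hr.
  change ((P s r < k) = (r < i)).
  case: (ltnP r i) => hri.
    have := @Pmono r i.-1 ltac:(lia); lia.
  have := @Pmono i r hri; lia.
have hle : i <= size s by lia.
rewrite -(subnKC hle) iotaD count_cat.
rewrite (@eq_in_count _ _ predT) ?count_predT ?size_iota; last first.
  by move=> r; rewrite mem_iota.
rewrite (@eq_in_count _ _ pred0) ?count_pred0 ?addn0 //.
by move=> r; rewrite mem_iota /=; lia.
Qed.

Lemma rowof_ex k : 0 < k <= m -> exists2 i, 1 <= i <= size s & P s i.-1 < k <= P s i.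
Proof.
move=> hk.
have ex : exists r, k <= P s r by exists (size s); rewrite Pn //; lia.
case: (ex_minnP ex) => i hi hmin; exists i.
  case: i hi hmin => [|i] hi hmin; first by rewrite P0 in hi; lia.
  case: (leqP i.+1 (size s)) => // hgt.
  have := hmin (size s); rewrite Pn // => h; have := h ltac:(lia); lia.
case: (leqP k (P s i.-1)) => h; last by rewrite hi.
have := hmin _ h; case: i hi {hmin} h => [|i]; first by rewrite P0; lia.
simpl; lia.
Qed.

Lemma ribbon_k i j : in_ribbon s i j ->
  [/\ 1 <= i <= size s, 0 < j, 0 < i + j - 1 <= m & rowof s (i + j - 1) = i].
Proof.
rewrite ribbonE => /andP[hi hk].
have := @Pgap' 0 i.-1 ltac:(lia) ltac:(lia); rewrite P0 => g.
have := Pm i => hm.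
split => //; try lia.
by apply: rowofE.
Qed.

Lemma cell_k k : 0 < k <= m ->
  in_ribbon s (rowof s k) (k - rowof s k + 1) /\ 0 < rowof s k <= k.
Proof.
move=> hk; case: (rowof_ex hk) => i hi hPk.
rewrite (rowofE hi hPk).
have := @Pgap' 0 i.-1 ltac:(lia) ltac:(lia); rewrite P0 => g.
have hik : i <= k by lia.
split; last by lia.
rewrite ribbonE hi /=.
have -> : i + (k - i + 1) - 1 = k by lia.
exact: hPk.
Qed.

Lemma row_mono i j i' j' : in_ribbon s i j -> in_ribbon s i' j' ->
  i + j - 1 <= i' + j' - 1 -> i <= i'.
Proof.
rewrite !ribbonE => /andP[h1 h2] /andP[h3 h4] hk.
case: (leqP i i') => // hlt.
have := @Pmono i' i.-1 ltac:(lia); lia.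
Qed.

Lemma col_k i j i' j' : in_ribbon s i j -> in_ribbon s i' j' ->
  j < j' -> i + j - 1 < i' + j' - 1.
Proof.
move=> r1 r2 hj.
case: (ltnP (i + j - 1) (i' + j' - 1)) => // hk.
have hii := row_mono r2 r1 hk.
move: r1 r2; rewrite !ribbonE => /andP[h1 h2] /andP[h3 h4].
case: (ltnP i' i) => hlt; last by lia.
have := @Pgap' i' i.-1 ltac:(lia) ltac:(lia); lia.
Qed.

Lemma ribbon_below i i' c : in_ribbon s i c -> in_ribbon s i' c -> i' < i ->
  in_ribbon s i'.+1 c /\ i' + c - 1 = P s i'.
Proof.
rewrite !ribbonE => /andP[h1 h2] /andP[h3 h4] hlt.
have := @Pgap' i' i.-1 ltac:(lia) ltac:(lia) => g.
have := @Pgap i' 1 ltac:(lia); rewrite !addn1 => g2.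
have hk : i' + c - 1 = P s i' by lia.
split => //.
apply/andP; split; first by lia.
change (P s i' < i'.+1 + c - 1 <= P s i'.+1); lia.
Qed.

Lemma rowof_step k : 0 < k < m ->
  rowof s k.+1 = rowof s k \/ rowof s k.+1 = (rowof s k).+1.
Proof.
move=> hk; case: (@rowof_ex k ltac:(lia)) => i hi hPk.
rewrite (rowofE hi hPk).
case: (leqP k.+1 (P s i)) => h.
  by left; apply: rowofE => //; lia.
right; have hi' : i < size s.
  case: (ltnP i (size s)) => // h'; have := Pn h'; lia.
have := @Pgap i 1 ltac:(lia); rewrite !addn1 => g.
apply: rowofE; first by lia.
simpl; lia.
Qed.

Lemma qbar1 T k : qbar s T 1 k = T (rowof s k) (k - rowof s k + 1) - (rowof s k - 1).
Proof. rewrite /qbar. have -> : 1 + k - 1 = k by lia. by rewrite subnn addn0. Qed.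


Lemma qbarE T i j : qbar s T i j =
  T (rowof s (i+j-1)) (i+j-1 - rowof s (i+j-1) + 1) - (rowof s (i+j-1) - 1) + (i - 1).
Proof. by []. Qed.

Lemma qbar_ij T i j : qbar s T i j = qbar s T 1 (i + j - 1) + (i - 1).
Proof. by rewrite qbarE qbar1. Qed.

Lemma row_weak T i j d : is_qrt s T -> in_ribbon s i j -> in_ribbon s i (j + d) ->
  T i j <= T i (j + d).
Proof.
move=> [_ [hr _]] h1; elim: d => [|d IH] h2; first by rewrite addn0.
have h3 : in_ribbon s i (j + d).
  move: h1 h2; rewrite !ribbonE => /andP[a b] /andP[c e]; apply/andP; split => //; lia.
apply: leq_trans (IH h3) _; rewrite addnS; apply: hr => //; by rewrite -addnS.
Qed.

Lemma T_ge_row T i j : is_qrt s T -> in_ribbon s i j -> i <= T i j.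
Proof.
move=> hT; elim: i j => [|i IH] j hr //.
case: i IH hr => [|i] IH hr; first by case: hT => hp _; exact: hp.
set c0 := P s i.+1 - i.+1 + 1.
move: (hr); rewrite ribbonE => /andP[h1 h2].
have := @Pgap i 1 ltac:(lia); rewrite !addn1 => g.
have := @Pgap' 0 i ltac:(lia) ltac:(lia); rewrite P0 => g0.
have r1 : in_ribbon s i.+1 c0 by rewrite ribbonE; apply/andP; split; [lia| simpl; lia].
have r2 : in_ribbon s i.+2 c0 by rewrite ribbonE; apply/andP; split; [lia| simpl in h2 |- *; lia].
have hc : c0 <= j by simpl in h2; lia.
have := @row_weak T i.+2 c0 (j - c0) hT r2; rewrite subnKC // => /(_ hr) w.
case: hT => _ [_ hc2]; have := hc2 _ _ r1 r2; have := IH _ r1; lia.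
Qed.

Lemma part1 T : is_qrt s T ->
  is_qarray m (qbar s T) /\ (forall i j, in_ribbon s i j -> qbar s T i j = T i j).
Proof.
move=> hT; split; [split|].
- move=> i j hi hj hm; rewrite qbar_ij; split => //.
  rewrite qbar1; have [hc hr] := @cell_k (i + j - 1) ltac:(lia).
  have := T_ge_row hT hc; lia.
- move=> j hj hjm; rewrite !qbar1.
  have [hc hr] := @cell_k j ltac:(lia).
  have [hc' hr'] := @cell_k j.+1 ltac:(lia).
  have := T_ge_row hT hc; have := T_ge_row hT hc'.
  case: (@rowof_step j ltac:(lia)) => e; move: hc' hr'; rewrite e.
  + have -> : j.+1 - rowof s j + 1 = (j - rowof s j + 1).+1 by lia.
    case: hT => _ [hrw _] hc' _; have := hrw _ _ hc hc'; lia.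
  + have -> : j.+1 - (rowof s j).+1 + 1 = j - rowof s j + 1 by lia.
    case: hT => _ [_ hcl] hc' _; have := hcl _ _ hc hc'; lia.
- move=> i j hr; have [h1 h2 h3 h4] := ribbon_k hr.
  rewrite qbarE h4; have -> : i + j - 1 - i + 1 = j by lia.
  have := T_ge_row hT hr; lia.
Qed.

Lemma QT T i j : is_qrt s T -> in_ribbon s i j -> T i j = qbar s T 1 (i + j - 1) + (i - 1).
Proof. move=> hT hr; have [_ ha] := part1 hT; by rewrite -ha // qbar_ij. Qed.

Lemma proj_qrt Q : is_qarray m Q -> is_qrt s (proj s Q).
Proof.
move=> [hQ hm]; rewrite /proj; split; [|split].
- move=> i j hr; rewrite hr; have [a b c _] := ribbon_k hr; by case: (hQ i j) => //; lia.
- move=> i j hr hr'; rewrite hr hr'.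
  have [a b c _] := ribbon_k hr; have [a' b' c' _] := ribbon_k hr'.
  case: (hQ i j) => //; try lia; move=> _ ->.
  case: (hQ i j.+1) => //; try lia; move=> _ ->.
  have := hm (i + j - 1) ltac:(lia) ltac:(lia).
  have -> : i + j.+1 - 1 = (i + j - 1).+1 by lia. lia.
- move=> i j hr hr'; rewrite hr hr'.
  have [a b c _] := ribbon_k hr; have [a' b' c' _] := ribbon_k hr'.
  case: (hQ i j) => //; try lia; move=> _ ->.
  case: (hQ i.+1 j) => //; try lia; move=> _ ->.
  have -> : i.+1 + j - 1 = i + j by lia. 
  have := hm (i + j - 1) ltac:(lia) ltac:(lia).
  have -> : (i + j - 1).+1 = i + j by lia. lia.
Qed.

Lemma proj_val Q i j : is_qarray m Q -> in_ribbon s i j ->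
  proj s Q i j = Q 1 (i + j - 1) + (i - 1).
Proof.
move=> [hQ _] hr; rewrite /proj hr; have [a b c _] := ribbon_k hr.
by case: (hQ i j) => //; lia.
Qed.

Lemma qbar_proj Q k : is_qarray m Q -> 0 < k <= m -> qbar s (proj s Q) 1 k = Q 1 k.
Proof.
move=> hQ hk; rewrite qbar1; have [hc hr] := cell_k hk.
rewrite proj_val //; have -> : rowof s k + (k - rowof s k + 1) - 1 = k by lia.
lia.
Qed.

End S.

Definition cells (s : seq nat) : seq (nat * nat) :=
  flatten [seq [seq (i, c) | i <- rev (iota 1 (size s)) & in_ribbon s i c] | c <- iota 1 (sumn s)].

Lemma colreadE s T : colread s T = map (fun p => T p.1 p.2) (cells s).
Proof.
rewrite /colread /cells map_flatten -map_comp; congr flatten; apply: eq_map => c /=.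
by rewrite -map_comp.
Qed.

Lemma mem_cells m s p : composition m s -> (p \in cells s) = in_ribbon s p.1 p.2.
Proof.
move=> hs; apply/flattenP/idP.
  case=> blk /mapP [c hc ->] /mapP [i]; rewrite mem_filter => /andP[hr _] -> //.
case: p => i j /= hr; have [a b c d] := ribbon_k hs hr.
exists [seq (i0, j) | i0 <- rev (iota 1 (size s)) & in_ribbon s i0 j].
  apply/mapP; exists j => //; rewrite mem_iota (hsum hs); lia.
apply/mapP; exists i => //; rewrite mem_filter hr mem_rev mem_iota; lia.
Qed.

Definition lt_cell (p p' : nat * nat) : bool :=
  (p.2 < p'.2) || ((p.2 == p'.2) && (p'.1 < p.1)).

Lemma lt_cell_trans : transitive lt_cell.
Proof. move=> [a b] [c d] [e f]; rewrite /lt_cell /=; case: eqP; case: eqP; lia. Qed.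
Lemma lt_cell_irr : irreflexive lt_cell.
Proof. move=> [a b]; rewrite /lt_cell /=; lia. Qed.

Lemma pw_rev_iota n : pairwise (fun i j => j < i) (rev (iota 1 n)).
Proof.
elim: n => [|n IH]; first done.
rewrite -[n.+1]addn1 iotaD rev_cat.
have -> : rev (iota (1 + n) 1) = [:: 1 + n] by [].
rewrite cat1s pairwise_cons IH andbT.
by rewrite all_rev; apply/allP => x; rewrite mem_iota; lia.
Qed.

Lemma pw_cells s : pairwise lt_cell (cells s).
Proof.
rewrite /cells.
have : pairwise ltn (iota 1 (sumn s)) by rewrite -sorted_pairwise ?iota_ltn_sorted //; exact: ltn_trans.
elim: (iota 1 (sumn s)) => //= c cs IH /andP[hc hcs].
rewrite pairwise_cat IH // andbT; apply/andP; split.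
  apply/allrelP => p q /mapP [i _ ->] /flattenP [blk /mapP [c' hc' ->]] /mapP [i' _ ->].
  by rewrite /lt_cell /=; apply/orP; left; exact: (allP hc _ hc').
rewrite pairwise_map; apply: pairwise_filter.
have := pw_rev_iota (size s); apply: sub_pairwise => x y.
rewrite /lt_cell /= eqxx; lia.
Qed.

Section G.
Variables (A : eqType) (B : eqType) (r : rel A).
Hypotheses (rt : transitive r) (ri : irreflexive r).

Lemma subseq2P (f : A -> B) L x y : pairwise r L ->
  subseq [:: x; y] (map f L) <-> exists p p', [/\ p \in L, p' \in L, r p p', f p = x & f p' = y].
Proof.
elim: L => [|a L IH] /=; first by split => // [[p [p' [] ]]].
move=> /andP[ha hL]; split.
  case: eqP => [ex|hx].
    rewrite sub1seq => /mapP [p' hp' ->]; exists a, p'; split => //.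
      by rewrite inE eqxx. by rewrite inE hp' orbT. by move/allP: ha; apply.
  move=> /(IH hL) [p [p' [h1 h2 h3 h4 h5]]]; exists p, p'; split => //; by rewrite inE ?h1 ?h2 orbT.
move=> [p [p' [h1 h2 h3 h4 h5]]].
move: h1 h2; rewrite !inE => h1 h2.
case: (eqVneq p a) h1 => [ep _| np /= h1].
  subst p; rewrite h4 eqxx sub1seq; case: (eqVneq p' a) h2 => [ep'|np' /= h2].
    by subst; rewrite ri in h3.
  by apply/mapP; exists p'.
case: (eqVneq p' a) h2 => [ep' _|np' /= h2].
  subst p'; have : r a p by move/allP: ha; apply.
  by move=> h; have := rt h h3; rewrite ri.
have hs : subseq [:: x; y] (map f L) by apply/(IH hL); exists p, p'.
case: ifP => _; last exact: hs.
by apply: subseq_trans _ hs; rewrite sub1seq !inE eqxx orbT.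
Qed.

Lemma last_repl (f : A -> nat) L p j : pairwise r L -> p \in L ->
  (forall p', p' \in L -> r p p' -> f p' != f p) ->
  rev (repl_first (f p) j (rev (map f L))) = map (fun z => if z == p then j else f z) L.
Proof.
elim/last_ind: L => [|L a IH] //= hpw hp hlast.
move: hpw; rewrite pairwise_rcons => /andP[ha hL].
rewrite map_rcons rev_rcons /=.
move: hp; rewrite mem_rcons inE => hp.
case: (eqVneq a p) => [eap|nap].
  subst a; rewrite eqxx rev_cons map_rcons eqxx; congr rcons.
  rewrite revK; apply/eq_in_map => z hz /=; case: eqP => // ezp; subst z.
  by have := allP ha _ hz; rewrite ri.
have hpL : p \in L by move: hp; rewrite eq_sym (negbTE nap).
have hfa : f a != f p.
  apply: hlast; first by rewrite mem_rcons inE eqxx.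
  by apply: (allP ha).
rewrite (negbTE hfa) rev_cons IH // ?map_rcons ?(negbTE nap) //.
by move=> p' hp' hr; apply: hlast => //; rewrite mem_rcons inE hp' orbT.
Qed.
End G.

Lemma map_eq_in (A : eqType) B (f g : A -> B) L : map f L = map g L -> forall x, x \in L -> f x = g x.
Proof. by move/eq_in_map. Qed.

Definition Erel (m : nat) (q1 q2 : nat -> nat) : Prop :=
  exists b, [/\ 0 < b <= m, q2 b = q1 b + 1,
    (forall k, 0 < k <= m -> k != b -> q2 k = q1 k) & (b < m -> q1 b < q1 b.+1)].

Lemma qmono m Q k d : is_qarray m Q -> 0 < k -> k + d <= m -> Q 1 k <= Q 1 (k + d).
Proof.
move=> [_ hm] hk; elim: d => [|d IH] h; first by rewrite addn0.
rewrite addnS; apply: leq_trans (IH ltac:(lia)) (hm _ _ _); lia.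
Qed.

Section Edge.
Variables (m : nat) (s : seq nat).
Hypothesis hs : composition m s.

Lemma qmono' T k k' : is_qrt s T -> 0 < k -> k <= k' -> k' <= m ->
  qbar s T 1 k <= qbar s T 1 k'.
Proof.
move=> hT h1 h2 h3; have [hQ _] := part1 hs hT.
have := @qmono m (qbar s T) k (k' - k) hQ h1; rewrite subnKC //; apply; lia.
Qed.

Lemma mono_cell T a b c d : is_qrt s T -> in_ribbon s a b -> in_ribbon s c d ->
  a + b - 1 <= c + d - 1 -> T a b <= T c d.
Proof.
move=> hT r1 r2 hk.
rewrite (QT hs hT r1) (QT hs hT r2).
have := row_mono hs r1 r2 hk.
have [_ _ h1 _] := ribbon_k hs r1; have [_ _ h2 _] := ribbon_k hs r2.
have := @qmono' T (a + b - 1) (c + d - 1) hT ltac:(lia) hk ltac:(lia).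
lia.
Qed.

Lemma edge_char T1 T2 : is_qrt s T1 -> is_qrt s T2 ->
  gamma_edge (colread s T1) (colread s T2) <-> Erel m (qbar s T1 1) (qbar s T2 1).
Proof.
move=> hT1 hT2.
have pw := pw_cells s.
set f1 := fun p : nat * nat => T1 p.1 p.2.
set f2 := fun p : nat * nat => T2 p.1 p.2.
have Q1 := QT hs hT1; have Q2 := QT hs hT2.
split.
- move=> [i [hi0]]; rewrite /qf; case: ifP => // /andP[hin hns] [hw2].
  rewrite !colreadE -/f1 -/f2 in hin hns hw2.
  pose Pk := fun k : nat => has (fun p : nat * nat => (f1 p == i) && (p.1 + p.2 - 1 == k)) (cells s).
  have exP : exists k, Pk k.
    case/mapP: hin => p0 hp0 e; exists (p0.1 + p0.2 - 1); apply/hasP; exists p0 => //.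
    by rewrite -e !eqxx.
  have ubP : forall k, Pk k -> k <= m.
    move=> k /hasP [[x y] hp /andP[_ /eqP <-]]; rewrite (mem_cells _ hs) in hp; simpl in *.
    by have [_ _ h _] := ribbon_k hs hp; lia.
  case: (ex_maxnP exP ubP) => b /hasP [[x y] hp /andP[/eqP hfp /eqP hkp]] hmax.
  rewrite /= in hkp; rewrite /f1 /= in hfp.
  have hpr : in_ribbon s x y by rewrite (mem_cells _ hs) in hp.
  have [hx hy hb hrow] := ribbon_k hs hpr.
  have hlast : forall p', p' \in cells s -> lt_cell (x, y) p' -> f1 p' != f1 (x, y).
    move=> [x' y'] hp' hlt; apply/eqP => e.
    have hpr' : in_ribbon s x' y' by rewrite (mem_cells _ hs) in hp'.
    move: hlt; rewrite /lt_cell /=; case/orP => [hlt | /andP[/eqP ey hlt]].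
      have := col_k hs hpr hpr' hlt.
      have : Pk (x' + y' - 1) by apply/hasP; exists (x', y') => //; rewrite /= e /f1 /= hfp !eqxx.
      move/hmax; lia.
    subst y'; move: e; rewrite /f1 /= (Q1 _ _ hpr) (Q1 _ _ hpr').
    have [hx'' _ h' _] := ribbon_k hs hpr'.
    have := @qmono' T1 (x' + y - 1) (x + y - 1) hT1 ltac:(lia) ltac:(lia) ltac:(lia).
    lia.
  move: hw2; rewrite -hfp -[T1 x y]/(f1 (x, y)) (last_repl lt_cell_irr) // => hw2.
  have hT2v : forall x' y', in_ribbon s x' y' ->
      T2 x' y' = if (x', y') == (x, y) then i.+1 else T1 x' y'.
    move=> x' y' hr'; have := map_eq_in hw2 (x := (x', y')).
    rewrite (mem_cells _ hs) /= => /(_ hr'); rewrite /f1 /f2 /= hfp => <- //.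
  exists b; split.
  + lia.
  + have := hT2v _ _ hpr; rewrite eqxx (Q2 _ _ hpr) -hfp (Q1 _ _ hpr) hkp; lia.
  + move=> k hk hkb; have [hc hr] := cell_k hs hk.
    have := hT2v _ _ hc; rewrite (Q1 _ _ hc) (Q2 _ _ hc).
    have -> : rowof s k + (k - rowof s k + 1) - 1 = k by lia.
    case: eqP => [[e1 e2]|_]; last by lia.
    by exfalso; move: hkb; rewrite -hkp -e1 -e2; lia.
  + move=> hbm.
    have [hd hrd] := @cell_k m s hs b.+1 ltac:(lia).
    set r' := rowof s b.+1 in hd hrd.
    have nd : T1 r' (b.+1 - r' + 1) != i.
      apply/eqP => e.
      have : Pk b.+1.
        apply/hasP; exists (r', b.+1 - r' + 1); first by rewrite (mem_cells _ hs).
        by rewrite /f1 /= e eqxx /=; apply/eqP; lia.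
      move/hmax; lia.
    have md := @mono_cell T1 x y r' (b.+1 - r' + 1) hT1 hpr hd ltac:(lia).
    have e1 := Q1 _ _ hpr; have e2 := Q1 _ _ hd.
    have hrs := @rowof_step m s hs b ltac:(lia).
    have hrb : rowof s b = x by rewrite -hkp.
    rewrite hrb -/r' in hrs.
    rewrite (_ : r' + (b.+1 - r' + 1) - 1 = b.+1) in e2; last by lia.
    rewrite hkp in e1.
    case: hrs => hrs; first by lia.
    case: (eqVneq (T1 r' (b.+1 - r' + 1)) i.+1) => e; last by lia.
    exfalso; move/negP: hns; apply; apply/(subseq2P lt_cell_trans lt_cell_irr f1 _ _ pw).
    exists (r', b.+1 - r' + 1), (x, y); split => //.
    * by rewrite (mem_cells _ hs).
    * rewrite /lt_cell /=; apply/orP; right; apply/andP; split; [apply/eqP|]; lia.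
- move=> [b [hb hq2 hoth hstep]].
  have [hp hr] := cell_k hs hb.
  set r := rowof s b in hp hr.
  set y := b - r + 1 in hp.
  have hkb : r + y - 1 = b by rewrite /y; lia.
  set i := T1 r y.
  have hi0 : 0 < i by case: hT1 => hpos _; exact: hpos.
  have hiq : i = qbar s T1 1 b + (r - 1) by rewrite /i (Q1 _ _ hp) hkb.
  exists i; split => //.
  rewrite /qf.
  have hin : i \in colread s T1.
    by rewrite colreadE; apply/mapP; exists (r, y); rewrite ?(mem_cells _ hs).
  have hns : ~~ subseq [:: i.+1; i] (colread s T1).
    apply/negP; rewrite colreadE => /(subseq2P lt_cell_trans lt_cell_irr f1 _ _ pw).
    move=> [[xa ya] [[xc yc] [ha hc hlt ea ec]]].
    rewrite (mem_cells _ hs) /= in ha; rewrite (mem_cells _ hs) /= in hc.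
    rewrite /f1 /= in ea ec.
    have [hxa _ hka hra] := ribbon_k hs ha; have [hxc _ hkc hrc] := ribbon_k hs hc.
    move: hlt; rewrite /lt_cell /=; case/orP => [hlt | /andP[/eqP ey hlt]].
      have := col_k hs ha hc hlt => hk.
      have := mono_cell hT1 ha hc ltac:(lia); lia.
    subst ya.
    have [hd hkd] := ribbon_below hs ha hc hlt.
    have ed := Q1 _ _ hd; have ec' := Q1 _ _ hc.
    have := @qmono' T1 (xc + yc - 1) (xc.+1 + yc - 1) hT1 ltac:(lia) ltac:(lia) ltac:(lia).
    have := @mono_cell T1 _ _ _ _ hT1 hd ha ltac:(lia).
    move=> m1 m2.
    have hd1 : T1 xc.+1 yc = i.+1. by lia.
    case: (ltngtP (xc + yc - 1) b) => hcb.
    + have := @mono_cell T1 _ _ _ _ hT1 hd hp ltac:(lia); lia.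
    + have := hstep ltac:(lia).
      have := @qmono' T1 b.+1 (xc + yc - 1) hT1 ltac:(lia) ltac:(lia) ltac:(lia).
      have := row_mono hs hp hc ltac:(lia).
      lia.
    + have hxcr : xc = r by rewrite -hrc hcb.
      have := hstep ltac:(lia).
      rewrite (_ : xc.+1 + yc - 1 = b.+1) in ed; last by lia.
      lia.
  rewrite hin hns /=; congr Some.
  have hlast : forall p', p' \in cells s -> lt_cell (r, y) p' -> f1 p' != f1 (r, y).
    move=> [x' y'] hp' hlt; apply/eqP => e.
    have hpr' : in_ribbon s x' y' by rewrite (mem_cells _ hs) in hp'.
    have [hx1 _ hk' hr'] := ribbon_k hs hpr'.
    move: e; rewrite /f1 /= (Q1 _ _ hpr') -/i hiq.
    move: hlt; rewrite /lt_cell /=; case/orP => [hlt | /andP[/eqP ey hlt]].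
      have := col_k hs hp hpr' hlt; rewrite hkb => hk.
      have := hstep ltac:(lia).
      have := @qmono' T1 b.+1 (x' + y' - 1) hT1 ltac:(lia) ltac:(lia) ltac:(lia).
      have := row_mono hs hp hpr' ltac:(lia).
      lia.
    subst y'.
    have := @qmono' T1 (x' + y - 1) b hT1 ltac:(lia) ltac:(lia) ltac:(lia).
    lia.
  rewrite !colreadE -/f1 -[i]/(f1 (r, y)) (last_repl lt_cell_irr) //; last first.
    by rewrite (mem_cells _ hs).
  apply/eq_in_map => [[x' y']] hz; rewrite (mem_cells _ hs) /= in hz.
  have [hx1 _ hk' hr'] := ribbon_k hs hz.
  rewrite /f1 /f2 /= (Q2 _ _ hz).
  case: eqP => [[-> ->]|ne].
    by rewrite hkb hq2 -/i hiq; lia.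
  have hkne : x' + y' - 1 != b.
    apply/eqP => e; apply: ne.
    have ex : x' = r by rewrite -hr' e.
    rewrite ex /y; congr pair; lia.
  by rewrite (Q1 _ _ hz) hoth //; lia.
Qed.
End Edge.

Lemma Erel_ext m q1 q2 q1' q2' :
  (forall k, 0 < k <= m -> q1 k = q1' k) -> (forall k, 0 < k <= m -> q2 k = q2' k) ->
  Erel m q1 q2 -> Erel m q1' q2'.
Proof.
move=> e1 e2 [b [hb h2 ho hs]]; exists b; split => //.
- by rewrite -e1 // -e2.
- by move=> k hk hkb; rewrite -e1 // -e2 // ho.
- move=> hbm; have := hs hbm; rewrite e1 ?e1 //; lia.
Qed.

Lemma colread_ext s T1 T2 m : composition m s ->
  (forall i j, in_ribbon s i j -> T1 i j = T2 i j) -> colread s T1 = colread s T2.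
Proof.
move=> hs h; rewrite !colreadE; apply/eq_in_map => [[i j]]; rewrite (mem_cells _ hs) => hr.
exact: h.
Qed.

Lemma colread_inj s T1 T2 m : composition m s ->
  colread s T1 = colread s T2 -> forall i j, in_ribbon s i j -> T1 i j = T2 i j.
Proof.
move=> hs; rewrite !colreadE => /map_eq_in h i j hr.
by apply: (h (i, j)); rewrite (mem_cells _ hs).
Qed.

Lemma qeq s T1 T2 m : composition m s ->
  (forall i j, in_ribbon s i j -> T1 i j = T2 i j) ->
  forall k, 0 < k <= m -> qbar s T1 1 k = qbar s T2 1 k.
Proof.
move=> hs h k hk; rewrite !(qbar1 hs); have [hc _] := cell_k hs hk; by rewrite h.
Qed.

Section Main.
Variables (m : nat) (sigma tau : seq nat).
Hypotheses (hsig : composition m sigma) (htau : composition m tau).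

Lemma psi_q T k : is_qrt sigma T -> 0 < k <= m ->
  qbar tau (Psi sigma tau T) 1 k = qbar sigma T 1 k.
Proof. move=> hT hk; exact: (qbar_proj htau (part1 hsig hT).1 hk). Qed.

Lemma psi_qrt T : is_qrt sigma T -> is_qrt tau (Psi sigma tau T).
Proof. move=> hT; exact: (proj_qrt htau (part1 hsig hT).1). Qed.

Lemma psiv T i j : is_qrt sigma T -> in_ribbon tau i j ->
  Psi sigma tau T i j = qbar sigma T 1 (i + j - 1) + (i - 1).
Proof. move=> hT hr; exact: (proj_val htau (part1 hsig hT).1 hr). Qed.
End Main.

Theorem corollary4p2 (m : nat) (sigma tau : seq nat) :
  0 < m -> composition m sigma -> composition m tau ->
  (forall T, is_qrt sigma T ->
     is_qarray m (qbar sigma T) /\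
     (forall i j, in_ribbon sigma i j -> qbar sigma T i j = T i j)) /\
  (forall T, is_qrt sigma T -> is_qrt tau (Psi sigma tau T)) /\
  (forall T1 T2, is_qrt sigma T1 -> is_qrt sigma T2 ->
     colread sigma T1 = colread sigma T2 ->
     colread tau (Psi sigma tau T1) = colread tau (Psi sigma tau T2)) /\
  (forall T1 T2, is_qrt sigma T1 -> is_qrt sigma T2 ->
     colread tau (Psi sigma tau T1) = colread tau (Psi sigma tau T2) ->
     colread sigma T1 = colread sigma T2) /\
  (forall T', is_qrt tau T' ->
     exists T, is_qrt sigma T /\ colread tau (Psi sigma tau T) = colread tau T') /\
  (forall T1 T2, is_qrt sigma T1 -> is_qrt sigma T2 ->
     (gamma_edge (colread sigma T1) (colread sigma T2) <->
      gamma_edge (colread tau (Psi sigma tau T1)) (colread tau (Psi sigma tau T2)))).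
Proof.
move=> hm hsig htau.
split; first exact: part1 hsig.
split; first exact: psi_qrt hsig htau.
split.
  move=> T1 T2 h1 h2 hc.
  have hq := qeq hsig (colread_inj hsig hc).
  apply: (colread_ext htau) => i j hr.
  have [_ _ hk _] := ribbon_k htau hr.
  by rewrite (psiv hsig htau h1 hr) (psiv hsig htau h2 hr) hq.
split.
  move=> T1 T2 h1 h2 hc.
  have hq := qeq htau (colread_inj htau hc).
  apply: (colread_ext hsig) => i j hr.
  have [_ _ hk _] := ribbon_k hsig hr.
  rewrite (QT hsig h1 hr) (QT hsig h2 hr) -(psi_q hsig htau h1 hk) -(psi_q hsig htau h2 hk).
  by rewrite hq.
split.
  move=> T' hT'; exists (Psi tau sigma T'); split; first exact (psi_qrt htau hsig hT').
  apply: (colread_ext htau) => i j hr.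
  have [_ _ hk _] := ribbon_k htau hr.
  have hT := psi_qrt htau hsig hT'.
  rewrite (psiv hsig htau hT hr) (psi_q htau hsig hT' hk).
  by rewrite (QT htau hT' hr).
move=> T1 T2 h1 h2.
rewrite (edge_char hsig h1 h2) (edge_char htau (psi_qrt hsig htau h1) (psi_qrt hsig htau h2)).
split; apply: Erel_ext => k hk.
- by rewrite (psi_q hsig htau h1 hk).
- by rewrite (psi_q hsig htau h2 hk).
- by rewrite (psi_q hsig htau h1 hk).
- by rewrite (psi_q hsig htau h2 hk).
Qed.
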